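(* Consider the local public good game described in the context and suppose Assumption 1 holds. Let $(x^*,y^*,g^* )$ be a Nash equilibrium and suppose there are players $i,j\in N$ with $x_i^*>k$ and $x_j^*>k$. Then $g_{ij}^*=1$.
   Context: There is a finite set of players $N=\{1,\dots,n\}$. Each player $i$ chooses a public good provision $x_i\ge 0$, a private good consumption $y_i\ge 0$, and links $g_i=(g_{i1},\dots,g_{in})\in\{0,1\}^n$ with $g_{ii}=0$; $g_{ij}=1$ means $i$ links to $j$. Let $N_i(g)=\{j:g_{ij}=1\}$ and $\eta_i(g)=|N_i(g)|$. Each link costs its sponsor $k>0$. Player $i$'s spillovers are $\bar x_{-i}=\sum_{j}g_{ij}x_j$ and her public good consumption is $\bar x_i=x_i+\bar x_{-i}$. Player $i$ maximizes $U_i(\bar x_i,y_i)$ subject to $x_i+p_iy_i+\eta_i(g)k=w_i$, where $w_i>0$, $p_i>0$, and $U_i$ is twice continuously differentiable, strictly concave and increasing in both arguments. The Engel curve $\gamma_i:\mathbb{R}\to\mathbb{R}$ gives, for income $W$, the public good consumption $\bar x$ maximizing $U_i(\bar x,y)$ subject to $\bar x+p_iy=W$; with net social income $\bar w_i(g)=w_i-\eta_i(g)k+\bar x_{-i}$, player $i$'s optimal provision is $x_i=\max\{\gamma_i(\bar w_i(g))-\bar x_{-i},0\}$. Assumption 1: for each $i$, $\gamma_i$ is continuously differentiable with $\gamma_i'(W)\in[0,1]$ for all $W$. A strategy profile $(x^*,y^*,g^* )$ is a Nash equilibrium if each player's strategy $(x_i^*,y_i^*,g_i^* )$ solves her maximization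 problem given the others' strategies. *)

(* Defs.v *)
From Stdlib Require Import Reals Lra List.
From Coquelicot Require Import Coquelicot.
Import ListNotations.
Open Scope R_scope.

Definition pd1 (f : R -> R -> R) : R -> R -> R :=
  fun a b => Derive (fun t => f t b) a.
Definition pd2 (f : R -> R -> R) : R -> R -> R :=
  fun a b => Derive (fun t => f a t) b.

Definition cont2 (f : R -> R -> R) : Prop :=
  forall a b : R, continuous (fun z : R * R => f (fst z) (snd z)) (a, b).

Definition has_partials (f : R -> R -> R) : Prop :=
  forall a b : R, ex_derive (fun t => f t b) a /\ ex_derive (fun t => f a t) b.

Definition C2_fun (f : R -> R -> R) : Prop :=
  has_partials f /\ has_partials (pd1 f) /\ has_partials (pd2 f) /\
  cont2 f /\ cont2 (pd1 f) /\ cont2 (pd2 f) /\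
  cont2 (pd1 (pd1 f)) /\ cont2 (pd2 (pd1 f)) /\
  cont2 (pd1 (pd2 f)) /\ cont2 (pd2 (pd2 f)).

Definition strictly_concave2 (f : R -> R -> R) : Prop :=
  forall a b c d t : R, (a, b) <> (c, d) -> 0 < t < 1 ->
    t * f a b + (1 - t) * f c d < f (t * a + (1 - t) * c) (t * b + (1 - t) * d).

Definition increasing2 (f : R -> R -> R) : Prop :=
  (forall a a' b, a < a' -> f a b < f a' b) /\
  (forall a b b', b < b' -> f a b < f a b').

(* gamma is the Engel curve of utility Ui at price pi: for each income W,
   gamma W is the public good consumption xbar maximizing Ui(xbar, y)
   subject to xbar + pi * y = W. *)
Definition engel_curve (Ui : R -> R -> R) (pi : R) (gamma : R -> R) : Prop :=
  forall W xb : R, Ui xb ((W - xb) / pi) <= Ui (gamma W) ((W - gamma W) / pi).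

Definition assumption1 (gamma : R -> R) : Prop :=
  (forall W, ex_derive gamma W) /\
  (forall W, continuous (Derive gamma) W) /\
  (forall W, 0 <= Derive gamma W <= 1).

(* Players are 0, ..., n-1.  A link vector of a player is gi : nat -> bool
   (gi j = true means the player links to j); only j < n are relevant. *)

Definition players (n : nat) : list nat := seq 0 n.

Definition nlinks (n : nat) (gi : nat -> bool) : R :=
  INR (length (filter gi (players n))).

Definition spill (n : nat) (gi : nat -> bool) (x : nat -> R) : R :=
  fold_right Rplus 0 (map (fun j => if gi j then x j else 0) (players n)).

Definition feasible (n : nat) (k : R) (w p : nat -> R) (i : nat)
    (xi yi : R) (gi : nat -> bool) : Prop :=
  0 <= xi /\ 0 <= yi /\ gi i = false /\
  xi + p i * yi + nlinks n gi * k = w i.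

Definition nash_eq (n : nat) (U : nat -> R -> R -> R) (k : R) (w p : nat -> R)
    (x y : nat -> R) (g : nat -> nat -> bool) : Prop :=
  forall i, (i < n)%nat ->
    feasible n k w p i (x i) (y i) (g i) /\
    forall xi yi gi, feasible n k w p i xi yi gi ->
      U i (xi + spill n gi x) yi <= U i (x i + spill n (g i) x) (y i).

(* Main.v *)
Require Import Defs.
From Stdlib Require Import Reals Lra Lia List.
From Coquelicot Require Import Coquelicot.
Open Scope R_scope.

Definition upd (gi : nat -> bool) (j : nat) : nat -> bool :=
  fun m => if Nat.eqb m j then true else gi m.

Lemma filt_out gi j : forall len s, (j < s)%nat ->
  filter (upd gi j) (seq s len) = filter gi (seq s len).
Proof.
  induction len as [|len IH]; intros s Hs; simpl; auto.
  unfold upd at 1. destruct (Nat.eqb_spec s j); [lia|].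
  rewrite IH by lia. reflexivity.
Qed.

Lemma filt_in gi j : gi j = false -> forall len s, (s <= j < s + len)%nat ->
  length (filter (upd gi j) (seq s len)) = S (length (filter gi (seq s len))).
Proof.
  intros Hg. induction len as [|len IH]; intros s Hs; simpl; [lia|].
  unfold upd at 1. destruct (Nat.eqb_spec s j).
  - subst. rewrite Hg. simpl. rewrite filt_out by lia. reflexivity.
  - destruct (gi s); simpl; rewrite IH by lia; reflexivity.
Qed.

Lemma spill_out gi j x : forall len s, (j < s)%nat ->
  map (fun m => if upd gi j m then x m else 0) (seq s len) =
  map (fun m => if gi m then x m else 0) (seq s len).
Proof.
  induction len as [|len IH]; intros s Hs; simpl; auto.
  unfold upd at 1. destruct (Nat.eqb_spec s j); [lia|].
  rewrite IH by lia. reflexivity.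
Qed.

Lemma spill_in gi j x : gi j = false -> forall len s, (s <= j < s + len)%nat ->
  fold_right Rplus 0 (map (fun m => if upd gi j m then x m else 0) (seq s len)) =
  fold_right Rplus 0 (map (fun m => if gi m then x m else 0) (seq s len)) + x j.
Proof.
  intros Hg. induction len as [|len IH]; intros s Hs; simpl; [lia|].
  unfold upd at 1. destruct (Nat.eqb_spec s j).
  - subst. rewrite Hg. rewrite spill_out by lia. lra.
  - rewrite IH by lia. lra.
Qed.

Theorem lemma2 (n : nat) (U : nat -> R -> R -> R) (gamma : nat -> R -> R)
    (w p : nat -> R) (k : R)
    (Hk : 0 < k)
    (Hw : forall i, (i < n)%nat -> 0 < w i)
    (Hp : forall i, (i < n)%nat -> 0 < p i)
    (HU_C2 : forall i, (i < n)%nat -> C2_fun (U i))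
    (HU_conc : forall i, (i < n)%nat -> strictly_concave2 (U i))
    (HU_incr : forall i, (i < n)%nat -> increasing2 (U i))
    (Hgamma : forall i, (i < n)%nat -> engel_curve (U i) (p i) (gamma i))
    (HA1 : forall i, (i < n)%nat -> assumption1 (gamma i))
    (x y : nat -> R) (g : nat -> nat -> bool)
    (Hnash : nash_eq n U k w p x y g) :
  forall i j, (i < n)%nat -> (j < n)%nat -> i <> j ->
    k < x i -> k < x j -> g i j = true.
Proof.
  intros i j Hi Hj Hij Hxi Hxj.
  destruct (g i j) eqn:Hgij; [reflexivity|exfalso].
  destruct (Hnash i Hi) as [[Hx0 [Hy0 [Hgii Hbud]]] Hbest].
  assert (Hl : nlinks n (upd (g i) j) = nlinks n (g i) + 1).
  { unfold nlinks, players. rewrite filt_in by (auto; lia). apply S_INR. }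
  assert (Hs : spill n (upd (g i) j) x = spill n (g i) x + x j).
  { unfold spill, players. apply spill_in; auto; lia. }
  assert (Hf : feasible n k w p i (x i - k) (y i) (upd (g i) j)).
  { repeat split; try lra.
    - unfold upd. destruct (Nat.eqb_spec i j); [lia|exact Hgii].
    - rewrite Hl. lra. }
  specialize (Hbest _ _ _ Hf). rewrite Hs in Hbest.
  destruct (HU_incr i Hi) as [Hinc _].
  assert (Hlt := Hinc (x i + spill n (g i) x) (x i - k + (spill n (g i) x + x j)) (y i) ltac:(lra)).
  lra.
Qed.
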